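(* Let $F$ and $G$ be connected finite simple graphs such that $G$ is a $k$-fold cover of $F$. Then $\gamma_c(G) \leq k(\gamma_c(F) + 2) - 2$. Moreover, this bound is tight: for every positive integer $k$ there exist connected graphs $F$ and $G$ with $G$ a $k$-fold cover of $F$ such that $\gamma_c(G) = k(\gamma_c(F)+2) - 2$.
   Context: All graphs are finite, simple and undirected. A graph $G$ is a cover of a graph $F$ if there is an onto map $\pi: V(G)\to V(F)$ such that for every vertex $v$ of $G$, $\pi$ maps the neighbours of $v$ in $G$ bijectively onto the neighbours of $\pi(v)$ in $F$; the cover is $k$-fold if every fibre $\pi^{-1}(u)$ has exactly $k$ vertices. A connected dominating set of a graph is a set $S$ of vertices such that every vertex not in $S$ is adjacent to some vertex of $S$ and the subgraph induced by $S$ is connected; $\gamma_c(\cdot)$ denotes the connected domination number, the minimum size of a connected dominating set (defined for connected graphs). *)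

(* Defs.v *)
From mathcomp Require Import all_boot.
Set Implicit Arguments. Unset Strict Implicit. Unset Printing Implicit Defensive.

Definition simple_graph (T : finType) (e : rel T) : Prop :=
  symmetric e /\ irreflexive e.

Definition connected_graph (T : finType) (e : rel T) : Prop :=
  (0 < #|T|)%N /\ forall x y : T, connect e x y.

Definition induced_rel (T : finType) (e : rel T) (S : {set T}) : rel T :=
  [rel u v | [&& u \in S, v \in S & e u v]].

Definition dominating (T : finType) (e : rel T) (S : {set T}) : bool :=
  [forall v, (v \in S) || [exists u in S, e v u]].

Definition induced_connected (T : finType) (e : rel T) (S : {set T}) : bool :=
  [forall x in S, forall y in S, connect (induced_rel e S) x y].

Definition connected_dominating (T : finType) (e : rel T) (S : {set T}) : bool :=
  dominating e S && induced_connected e S.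

(* connected domination number: minimum size of a connected dominating set
   (for a connected graph, [set: T] is one, so the default #|T| is harmless) *)
Definition gamma_c (T : finType) (e : rel T) : nat :=
  \big[minn/#|T|]_(S : {set T} | connected_dominating e S) #|S|.

Definition covering_map (TG TF : finType) (eG : rel TG) (eF : rel TF)
    (pi : TG -> TF) : Prop :=
  (forall x : TF, exists y : TG, pi y = x) /\
  (forall v : TG,
     {in [set u | eG v u] &, injective pi} /\
     pi @: [set u | eG v u] = [set w | eF (pi v) w]).

Definition k_fold_cover (k : nat) (TG TF : finType) (eG : rel TG) (eF : rel TF)
    : Prop :=
  exists pi : TG -> TF, covering_map eG eF pi /\
    forall x : TF, #|[set y | pi y == x]| = k.

(* Main.v *)
Require Import Defs.
From mathcomp Require Import all_boot zify.
Set Implicit Arguments. Unset Strict Implicit. Unset Printing Implicit Defensive.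


Section Gen.
Variable T : finType.
Variable e : rel T.

Lemma gamma_le S : connected_dominating e S -> gamma_c e <= #|S|.
Proof.
move=> H; rewrite /gamma_c -big_filter.
have : S \in [seq i <- index_enum {set T} | connected_dominating e i].
  by rewrite mem_filter H /index_enum -enumT mem_enum.
elim: [seq _ <- _ | _] => [|a s IH] //=; rewrite big_cons inE.
case/orP => [/eqP <-|/IH h]; first exact: geq_minl.
exact: leq_trans (geq_minr _ _) h.
Qed.

Lemma gamma_ge b : b <= #|T| -> (forall S, connected_dominating e S -> b <= #|S|) ->
  b <= gamma_c e.
Proof.
move=> hT hS; rewrite /gamma_c; apply: (big_ind (fun v => b <= v)) => //; try by move=> S /hS.
by move=> x y hx hy; rewrite leq_min hx hy.
Qed.

Lemma gamma_attained : connected_dominating e setT ->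
  exists S, connected_dominating e S /\ #|S| = gamma_c e.
Proof.
move=> HT; rewrite /gamma_c.
apply: (big_ind (fun v => exists S, connected_dominating e S /\ #|S| = v)).
- by exists setT; rewrite cardsT.
- move=> x y [S1 [h1 <-]] [S2 [h2 <-]].
  case: (leqP #|S1| #|S2|) => h; [exists S1 | exists S2]; split => //.
  all: try by rewrite /minn ?h ?(ltnNge) ?h.
- by move=> S hS; exists S.
Qed.

Lemma closure_lemma (A : pred T) x y : (forall a z, A a -> e a z -> A z) ->
  connect e x y -> A x -> A y.
Proof.
move=> hA /connectP [p hp ->]; elim: p x hp => //= z p IH x /andP [exz hp] hx.
exact: (IH z hp (hA _ _ hx exz)).
Qed.

Lemma induced_sym (S : {set T}) : symmetric e -> symmetric (induced_rel e S).
Proof. by move=> hs x y; rewrite /induced_rel /= hs andbCA. Qed.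

Lemma induced_mono (S S' : {set T}) x y : S \subset S' ->
  connect (induced_rel e S) x y -> connect (induced_rel e S') x y.
Proof.
move=> sub; apply: connect_sub => a b /= /and3P [ha hb hab].
by apply: connect1; rewrite /induced_rel /= (subsetP sub _ ha) (subsetP sub _ hb).
Qed.

Lemma setT_cd : connected_graph e -> connected_dominating e setT.
Proof.
move=> [_ hc]; apply/andP; split.
  by apply/forallP => v; rewrite in_setT.
apply/forallP => x; apply/implyP => _; apply/forallP => y; apply/implyP => _.
have := hc x y; apply: connect_sub => a b hab; apply: connect1.
by rewrite /induced_rel /= !in_setT.
Qed.

End Gen.


Lemma ar1 (g a b n : nat) : g <= a + 2*n -> a <= b + 2 -> g <= b + 2 * n.+1.
Proof. lia. Qed.
Lemma ar2 (c n : nat) : true + c <= n.+2 -> c <= n.+1.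
Proof. simpl; lia. Qed.
Lemma ar3 (a c : nat) (d : bool) : a + d.+1 - c <= a + 2.
Proof. case: d; lia. Qed.

Section Conn.
Variable T : finType.
Variable e : rel T.
Hypothesis hs : symmetric e.
Hypothesis hc : connected_graph e.

Lemma connect_up n : forall (S R : {set T}), #|R| <= n.+1 -> dominating e S ->
  R \subset S ->
  (forall s, s \in S -> exists2 r, r \in R & connect (induced_rel e S) r s) ->
  gamma_c e <= #|S| + 2 * n.
Proof.
elim: n => [|n IH] S R hR hD hRS hcov.
all: case: (boolP (induced_connected e S)) => hcon;
  first by apply: leq_trans (gamma_le (S := S) _) (leq_addr _ _);
           rewrite /connected_dominating hD hcon.
all: move/forallPn: hcon => [x0]; rewrite negb_imply => /andP[hx0 /forallPn [y0]].
all: rewrite negb_imply => /andP [hy0 hxy].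
all: have csym := sym_connect_sym (induced_sym S hs).
- exfalso; move: hxy => /negP; apply.
  have [rx hrx cx] := hcov _ hx0; have [ry hry cy] := hcov _ hy0.
  have eq : rx = ry by move/card_le1_eqP: hR => /(_ _ _ hrx hry).
  by apply: (connect_trans (y:=rx)); [rewrite csym | rewrite eq].
have [r1 hr1 c1] := hcov _ hx0.
pose C := [set s in S | connect (induced_rel e S) r1 s].
pose NC := fun x => [exists a in C, (a == x) || e a x].
pose ND := fun y => [exists b in S :\: C, (b == y) || e b y].
have hy0C : y0 \notin C.
  apply/negP; rewrite inE => /andP [_ c2]; move/negP: hxy; apply.
  by apply: (connect_trans (y:=r1)) c2; rewrite csym.
have dom z : NC z || ND z.
  move/forallP: hD => /(_ z) /orP [hz | /existsP [u /andP [hu hzu]]].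
    case: (boolP (z \in C)) => hzC.
      by apply/orP; left; apply/existsP; exists z; rewrite hzC eqxx.
    by apply/orP; right; apply/existsP; exists z; rewrite in_setD hzC hz eqxx.
  case: (boolP (u \in C)) => huC.
    by apply/orP; left; apply/existsP; exists u; rewrite huC hs hzu orbT.
  by apply/orP; right; apply/existsP; exists u; rewrite in_setD huC hu hs hzu orbT.
case: (boolP [exists x, exists y, [&& NC x, ND y & (x == y) || e x y]]);
  last first.
  move=> hno; exfalso.
  have cl : forall a z, NC a -> e a z -> NC z.
    move=> a z ha haz; case/orP: (dom z) => // hz; exfalso; move/negP: hno; apply.
    by apply/existsP; exists a; apply/existsP; exists z; rewrite ha hz haz orbT.
  have := closure_lemma cl (proj2 hc x0 y0).
  have hx0C : NC x0 by apply/existsP; exists x0; rewrite !inE hx0 c1 eqxx.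
  move=> /(_ hx0C) hy; move/negP: hno; apply.
  apply/existsP; exists y0; apply/existsP; exists y0; rewrite hy eqxx /= andbT.
  by apply/existsP; exists y0; rewrite in_setD hy0C hy0 eqxx.
move=> /existsP [x /existsP [y /and3P [/existsP [a /andP [haC hax]]
   /existsP [b /andP [hbC hby]] hxy']]].
move: haC; rewrite /C inE => /andP [haS ca].
move: hbC; rewrite in_setD => /andP [hbnC hbS].
have [rb hrb cb] := hcov _ hbS.
have hrb1 : rb != r1.
  apply/negP => /eqP E; move/negP: hbnC; apply; rewrite /C inE hbS /=.
  by rewrite -E.
pose S' := S :|: [set x; y].
have sub : S \subset S' by apply: subsetUl.
have hxS' : x \in S' by rewrite !inE eqxx orbT.
have hyS' : y \in S' by rewrite !inE eqxx !orbT.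
have inS' u : u \in S -> u \in S' by move=> hu; rewrite (subsetP sub _ hu).
have step u v : u \in S' -> v \in S' -> (u == v) || e u v ->
    connect (induced_rel e S') u v.
  move=> hu hv /orP [/eqP -> | huv]; first exact: connect0.
  by apply: connect1; rewrite /induced_rel /= hu hv huv.
have csym' := sym_connect_sym (induced_sym S' hs).
have r1x : connect (induced_rel e S') r1 x.
  exact: connect_trans (induced_mono sub ca) (step _ _ (inS' _ haS) hxS' hax).
have r1y : connect (induced_rel e S') r1 y := connect_trans r1x (step _ _ hxS' hyS' hxy').
have r1b : connect (induced_rel e S') r1 b.
  apply: connect_trans r1y (step _ _ hyS' (inS' _ hbS) _).
  by case/orP: hby => [/eqP ->|h]; rewrite ?eqxx // hs h orbT.
have hr1' : r1 \in R :\ rb by rewrite !inE eq_sym hrb1 hr1.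
have := IH S' (R :\ rb).
move=> H.
have h1 : #|R :\ rb| <= n.+1.
  by move: hR; rewrite (cardsD1 rb R) hrb; apply: ar2.
have h2 : dominating e S'.
  apply/forallP => v; move/forallP: hD => /(_ v) /orP [h|/existsP [u /andP [hu hvu]]].
    by rewrite inS'.
  by apply/orP; right; apply/existsP; exists u; rewrite inS'.
have h3 : R :\ rb \subset S'.
  apply/subsetP => u; rewrite in_setD1 => /andP [_ hu]; exact: (inS' _ (subsetP hRS _ hu)).
have h4 : forall s, s \in S' -> exists2 r, r \in R :\ rb & connect (induced_rel e S') r s.
  move=> s; rewrite /S' in_setU => /orP [hs0 | hxy2].
    have [rs hrs cs] := hcov _ hs0.
    case: (boolP (rs == rb)) => hrsb.
      exists r1 => //; apply: connect_trans r1b _.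
      apply: connect_trans (induced_mono sub cs).
      by rewrite (eqP hrsb) csym'; exact: induced_mono sub cb.
    by exists rs; [rewrite !inE hrsb hrs | exact: induced_mono sub cs].
  by exists r1 => //; case/set2P: hxy2 => ->.
have h5 : #|S'| <= #|S| + 2.
  by rewrite /S' cardsU cards2; apply: ar3.
exact: ar1 (H h1 h2 h3 h4) h5.
Qed.

End Conn.


Lemma ar4 (g a k d : nat) : g <= a + 2 * k.-1 -> a <= k * d -> g <= k * (d + 2) - 2.
Proof. case: k => [|k] /=; rewrite ?mul0n ?mulnDr; lia. Qed.

Lemma part1 (k : nat) (TF TG : finType) (eF : rel TF) (eG : rel TG) :
      simple_graph eF -> simple_graph eG ->
      connected_graph eF -> connected_graph eG ->
      k_fold_cover k eG eF ->
      (gamma_c eG <= k * (gamma_c eF + 2) - 2)%N.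
Proof.
move=> [sF iF] [sG iG] cF cG [pi [[onto hloc] hfib]].
have [D [hDcd <-]] := gamma_attained (setT_cd cF).
move: (hDcd) => /andP [hDd hDc].
pose P := [set y | pi y \in D].
have hcardP : #|P| <= k * #|D|.
  rewrite -sum1_card (partition_big pi (fun x => x \in D)) /=; last first.
    by move=> i; rewrite inE.
  rewrite mulnC -sum_nat_const; apply: leq_sum => x hx.
  rewrite -(hfib x) -sum1_card; apply: eq_leq; apply: eq_bigl => y.
  by rewrite !inE; case: (pi y =P x) => [->|]; rewrite ?hx ?andbF.
have hPd : dominating eG P.
  apply/forallP => v; move/forallP: hDd => /(_ (pi v)) /orP [h|/existsP [u /andP [hu hvu]]].
    by rewrite inE h.
  have : u \in [set w | eF (pi v) w] by rewrite inE.
  rewrite -(proj2 (hloc v)) => /imsetP [w]; rewrite inE => hvw E; subst u.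
  by apply/orP; right; apply/existsP; exists w; rewrite inE hu.
have [x0 _] : exists x : TF, true.
  by case: cF => /card_gt0P [x _] _; exists x.
have [d0 hd0] : exists d0, d0 \in D.
  move/forallP: hDd => /(_ x0) /orP [h|/existsP [u /andP [hu _]]]; by eauto.
pose R := [set y | pi y == d0].
have lift : forall p y, pi y \in D -> path (induced_rel eF D) (pi y) p ->
    exists2 y', pi y' = last (pi y) p & connect (induced_rel eG P) y y'.
  elim => [|z p IH] y hy /=.
    by move=> _; exists y.
  case/andP => /and3P [_ hz hyz] hp.
  have : z \in [set w | eF (pi y) w] by rewrite inE.
  rewrite -(proj2 (hloc y)) => /imsetP [w]; rewrite inE => hyw hzw.
  subst z.
  have [y' h1 h2] := IH w hz hp.
  exists y' => //; apply: connect_trans h2; apply: connect1.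
  by rewrite /induced_rel /= !inE hy hz hyw.
have hcov : forall s, s \in P -> exists2 r, r \in R & connect (induced_rel eG P) r s.
  move=> s hs; move: (hs); rewrite inE => hs'.
  move/forallP: hDc => /(_ (pi s)); rewrite hs' /= => /forallP /(_ d0); rewrite hd0 /=.
  move=> /connectP [p hp hl].
  have [y' h1 h2] := lift p s hs' hp.
  exists y'; first by rewrite inE h1 -hl.
  by rewrite (sym_connect_sym (induced_sym P sG)).
have hRP : R \subset P.
  by apply/subsetP => y; rewrite !inE => /eqP ->.
have hR : #|R| <= k.-1.+1 by rewrite hfib; lia.
have := connect_up sG cG hR hPd hRP hcov.
move=> h; exact: ar4 h hcardP.
Qed.


Definition cycb (n a b : nat) : bool :=
  [|| b == a.+1, a == b.+1, (a == 0) && (b == n.+2) | (b == 0) && (a == n.+2)].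

Definition cyc n : rel 'I_n.+3 := fun x y => cycb n x y.
Arguments cyc : clear implicits.

Lemma cyc_simple n : simple_graph (cyc n).
Proof.
split.
  by move=> x y; rewrite /cyc /cycb; apply/idP/idP; lia.
by move=> x; rewrite /cyc /cycb; apply/negP; have := ltn_ord x; lia.
Qed.

Lemma cyc_path n (S : {set 'I_n.+3}) i : (forall x : 'I_n.+3, x <= i -> x \in S) ->
  forall x : 'I_n.+3, x <= i -> connect (induced_rel (cyc n) S) ord0 x.
Proof.
move=> hS; elim: i hS => [|i IH] hS x hx.
  have -> : x = ord0 by apply: val_inj => /=; lia.
  exact: connect0.
case: (leqP x i) => hxi.
  by apply: IH => // y hy; apply: hS; lia.
have hi : i < n.+3 by have := ltn_ord x; lia.
apply: (connect_trans (y := inord i)).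
  by apply: IH; [move=> y hy; apply: hS; lia | rewrite inordK].
apply: connect1; rewrite /induced_rel /= !hS ?inordK //; try lia.
by rewrite /cyc /cycb inordK //; apply/orP; left; apply/eqP; lia.
Qed.

Lemma cyc_connected n : connected_graph (cyc n).
Proof.
split; first by rewrite card_ord.
have h0 x : connect (cyc n) ord0 x.
  have := @cyc_path n setT n.+2 (fun _ _ => in_setT _) x.
  have hx := ltn_ord x.
  move=> /(_ (hx : x <= n.+2)); apply: connect_sub => a b.
  by rewrite /induced_rel /= !in_setT /= => h; apply: connect1.
move=> x y; apply: connect_trans (h0 y).
by rewrite (sym_connect_sym (proj1 (cyc_simple n))).
Qed.

Lemma cyc_upper n : gamma_c (cyc n) <= n.+1.
Proof.
pose S := [set x : 'I_n.+3 | x <= n].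
have hS : connected_dominating (cyc n) S.
  apply/andP; split.
    apply/forallP => v; rewrite inE; case: (leqP v n) => //= hv.
    have hvl := ltn_ord v.
    case: (v =P n.+1 :> nat) => hv1.
      have hn : n < n.+3 by lia.
      apply/existsP; exists (inord n); rewrite inE (inordK hn) leqnn /=.
      by rewrite /cyc /cycb (inordK hn); lia.
    apply/existsP; exists ord0; rewrite inE /=.
    rewrite /cyc /cycb /=; lia.
  apply/forallP => x; apply/implyP => hx; apply/forallP => y; apply/implyP => hy.
  have hsym := sym_connect_sym (induced_sym S (proj1 (cyc_simple n))).
  have c0 z : z \in S -> connect (induced_rel (cyc n) S) ord0 z.
    move=> hz; apply: (@cyc_path n S n) => [w hw|]; first by rewrite inE.
    by move: hz; rewrite inE.
  by apply: connect_trans (c0 y hy); rewrite hsym; apply: c0.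
apply: leq_trans (gamma_le hS) _.
have hC : ~: S = [set (ord_max : 'I_n.+3); inord n.+1].
  apply/setP => x; rewrite !inE -!val_eqE /= inordK //.
  by move: (ltn_ord x) => hx; apply/idP/idP; lia.
have := cardsC S; rewrite hC cards2 card_ord.
have -> : (ord_max : 'I_n.+3) != inord n.+1 by rewrite -val_eqE /= inordK; lia.
by move=> /= h; lia.
Qed.


Definition pos n (u x : nat) : nat := if u < x then x - u - 1 else x + n.+2 - u.

Section Pos.
Variables (n u : nat).
Hypothesis hu : u < n.+3.

Lemma posF0 x : x < n.+3 -> x != u -> pos n u x <= n.+1.
Proof. rewrite /pos; case: ifP => ? ? ?; lia. Qed.
Lemma posU : pos n u u = n.+2.
Proof. rewrite /pos ltnn; lia. Qed.
Lemma posF2 x y : x < n.+3 -> y < n.+3 -> pos n u x = pos n u y -> x = y.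
Proof. rewrite /pos; case: ifP => ?; case: ifP => ? ? ?; lia. Qed.
Lemma posF3 x y : x < n.+3 -> y < n.+3 -> x != u -> y != u -> cycb n x y ->
  pos n u y = (pos n u x).+1 \/ pos n u x = (pos n u y).+1.
Proof. rewrite /pos /cycb; case: ifP => ?; case: ifP => ? ? ? ? ? ?; lia. Qed.
Lemma posF4 z : z < n.+3 -> z != u -> cycb n u z -> pos n u z = 0 \/ pos n u z = n.+1.
Proof. rewrite /pos /cycb; case: ifP => ? ? ? ?; lia. Qed.
Lemma posF5 t : t <= n.+2 -> exists2 w, w < n.+3 & pos n u w = t.
Proof.
move=> ht; case: (ltnP (t + u).+1 n.+3) => h.
  exists (t + u).+1 => //; rewrite /pos; case: ifP => ?; lia.
exists ((t + u).+1 - n.+3); first lia.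
rewrite /pos; case: ifP => ?; lia.
Qed.
End Pos.

Lemma cyc_lower n (S : {set 'I_n.+3}) : connected_dominating (cyc n) S -> n.+1 <= #|S|.
Proof.
move=> /andP [hD hC].
rewrite leqNgt; apply/negP => hlt.
have h3 : 2 < #|~: S| by have := cardsC S; rewrite card_ord; clear -hlt; lia.
have [u hu] : exists u, u \in ~: S by apply/card_gt0P; clear -h3; lia.
have h2 : 1 < #|~: S :\ u| by move: h3; rewrite (cardsD1 u) hu add1n.
have [a [b [ha hb hab]]] := card_gt1P h2.
move: hu; rewrite inE => huS.
move: ha; rewrite !inE => /andP [hau haS].
move: hb; rewrite !inE => /andP [hbu hbS].
have hun := ltn_ord u.
pose p (x : 'I_n.+3) := pos n u x.
have pdef x : p x = pos n u x by [].
clearbody p.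
have notu x : x \in S -> x != u.
  by move=> hx; apply/negP => /eqP E; move: huS; rewrite -E hx.
have pinj x y : p x = p y -> x = y.
  by rewrite !pdef => h; apply: val_inj; exact: (posF2 hun (ltn_ord x) (ltn_ord y) h).
have pu : p u = n.+2 by rewrite pdef; exact: posU.
have pb x : x != u -> p x <= n.+1.
  by rewrite pdef => h; apply: (posF0 hun (ltn_ord x)); rewrite val_eqE.
have side c x y : c \notin S -> x \in S -> y \in S -> p x < p c -> p y < p c.
  move=> hc hx hy hxc.
  have cxy : connect (induced_rel (cyc n) S) x y.
    by move/forallP: hC => /(_ x) /implyP /(_ hx) /forallP /(_ y) /implyP /(_ hy).
  apply: (closure_lemma (A := fun z => p z < p c)) cxy hxc => a' z ha' /and3P [ha'S hzS haz].
  have hzc : p z != p c.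
    by apply/negP => /eqP /pinj E; move: hc; rewrite -E hzS.
  have := posF3 hun (ltn_ord a') (ltn_ord z) _ _ haz.
  rewrite !val_eqE (notu _ ha'S) (notu _ hzS) => /(_ isT isT).
  rewrite -!pdef; move: hzc ha'; clear; lia.
have dom w : w \notin S -> exists2 z, z \in S & cyc n w z.
  move=> hw; move/forallP: hD => /(_ w); rewrite (negbTE hw) /=.
  by move=> /existsP [z /andP [hz hwz]]; exists z.
have nb w z : w != u -> z \in S -> cyc n w z -> p z = (p w).+1 \/ p w = (p z).+1.
  move=> hw hz hwz; have := posF3 hun (ltn_ord w) (ltn_ord z) _ _ hwz.
  by rewrite !val_eqE hw (notu _ hz) -!pdef => /(_ isT isT).
have key a0 b0 : a0 \notin S -> b0 \notin S -> a0 != u -> b0 != u -> p a0 < p b0 -> False.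
  move=> haS0 hbS0 hau0 hbu0 hab0.
  have [s0 hs0 hus0] := dom u huS.
  have hpb := pb _ hbu0.
  case: (ltngtP (p s0) (p a0)) => [lt1|gt1|eq1].
  - have hle : (p a0).+1 <= n.+2 by clear -hab0 hpb; lia.
    have [w hw pw] := posF5 hun hle.
    pose W := Ordinal hw.
    have pW : p W = (p a0).+1 by rewrite pdef.
    have hWu : W != u.
      by apply/negP => /eqP E; move: pW; rewrite E pu; clear -hab0 hpb; lia.
    have hWS : W \notin S.
      by apply/negP => hWS; have := side _ _ _ haS0 hs0 hWS lt1; clear -pW; lia.
    have [z hz hWz] := dom _ hWS.
    case: (nb _ _ hWu hz hWz) => hpz.
      by have := side _ _ _ haS0 hs0 hz lt1; clear -pW hpz; lia.
    have E : z = a0 by apply: pinj; clear -pW hpz; lia.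
    by move: haS0; rewrite -E hz.
  - case: (ltngtP (p s0) (p b0)) => [lt2|gt2|eq2].
    + have := posF4 hun (ltn_ord s0) _ hus0; rewrite val_eqE (notu _ hs0) => /(_ isT).
      rewrite -pdef; clear -lt2 gt1 hpb; lia.
    + have hle : (p b0).-1 <= n.+2 by clear -hpb; lia.
      have [w hw pw] := posF5 hun hle.
      pose W := Ordinal hw.
      have pW : p W = (p b0).-1 by rewrite pdef.
      have hWu : W != u.
        by apply/negP => /eqP E; move: pW; rewrite E pu; clear -hab0 hpb; lia.
      have hWS : W \notin S.
        by apply/negP => hWS; have := side _ _ _ hbS0 hWS hs0; clear -pW gt2 hab0; lia.
      have [z hz hWz] := dom _ hWS.
      case: (nb _ _ hWu hz hWz) => hpz.
        have E : z = b0 by apply: pinj; clear -pW hpz hab0; lia.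
        by move: hbS0; rewrite -E hz.
      by have := side _ _ _ hbS0 hz hs0; clear -pW hpz gt2 hab0; lia.
    + by move: hbS0; rewrite -(pinj _ _ eq2) hs0.
  - by move: haS0; rewrite -(pinj _ _ eq1) hs0.
case: (ltngtP (p a) (p b)) => [h|h|h].
- exact: key a b haS hbS hau hbu h.
- exact: key b a hbS haS hbu hau h.
- by move: hab; rewrite (pinj _ _ h) eqxx.
Qed.


Definition K3 : rel 'I_3 := fun a b => a != b.

Lemma K3_simple : simple_graph K3.
Proof. by split; [move=> x y; rewrite /K3 eq_sym | move=> x; rewrite /K3 eqxx]. Qed.

Lemma K3_connected : connected_graph K3.
Proof.
split; first by rewrite card_ord.
move=> x y; case: (boolP (x == y)) => [/eqP ->|h]; first exact: connect0.
exact: connect1.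
Qed.

Lemma K3_gamma : gamma_c K3 = 1.
Proof.
apply/eqP; rewrite eqn_leq; apply/andP; split.
  apply: (@leq_trans #|[set (ord0 : 'I_3)]|); last by rewrite cards1.
  apply: gamma_le; apply/andP; split.
    apply/forallP => v; case: (boolP (v == ord0)) => h; first by rewrite inE h.
    by apply/orP; right; apply/existsP; exists ord0; rewrite inE eqxx /K3.
  apply/forallP => x; apply/implyP => /set1P ->; apply/forallP => y.
  by apply/implyP => /set1P ->; exact: connect0.
apply: gamma_ge; first by rewrite card_ord.
move=> S /andP [hD _]; apply/card_gt0P.
move/forallP: hD => /(_ ord0) /orP [h|/existsP [u /andP [hu _]]]; by eauto.
Qed.

Definition pi3 n (x : 'I_n.+3) : 'I_3 := Ordinal (ltn_pmod x (isT : 0 < 3)).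

Lemma cyc_cover k : covering_map (cyc (3 * k)) K3 (@pi3 (3 * k)) /\
  forall x : 'I_3, #|[set y | @pi3 (3 * k) y == x]| = k.+1.
Proof.
set n := 3 * k.
have hn : n.+3 = 3 * k.+1 by rewrite /n; lia.
split; [split|].
- move=> x; exists (inord x); apply: ord_inj => /=.
  have hx := ltn_ord x; rewrite inordK; clear -hx; lia.
- move=> v; split.
    move=> u1 u2; rewrite !inE => h1 h2 /(congr1 val) /= h.
    apply: ord_inj; move: (ltn_ord u1) (ltn_ord u2) (ltn_ord v) h1 h2 h hn.
    rewrite /cyc /cycb; clear; lia.
  apply/setP => w; rewrite inE; apply/imsetP/idP.
    move=> [x]; rewrite inE => hx ->; rewrite /K3 -val_eqE /=.
    move: (ltn_ord x) (ltn_ord v) hx hn; rewrite /cyc /cycb; clear; lia.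
  rewrite /K3 -val_eqE /= => hw.
  have [t [ht1 ht2 ht3]] : exists t, [/\ t < n.+3, cycb n v t & t %% 3 = w].
    have hvl := ltn_ord v; have hwl := ltn_ord w.
    case: (boolP (nat_of_ord w == (v.+1) %% 3)) => h.
      case: (nat_of_ord v =P n.+2) => hv.
        by exists 0; rewrite /cycb; split; lia.
      by exists v.+1; rewrite /cycb; split; lia.
    case: (nat_of_ord v =P 0) => hv.
      by exists n.+2; rewrite /cycb; split; lia.
    by exists v.-1; rewrite /cycb; split; lia.
  exists (inord t); first by rewrite inE /cyc inordK.
  by apply: ord_inj; rewrite /= inordK.
- move=> x.
  pose f (j : 'I_k.+1) : 'I_n.+3 := inord (3 * j + x).
  have hx := ltn_ord x.
  have finj : injective f.
    move=> j1 j2 /(congr1 val); rewrite /f /= !inordK;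
      try by move: (ltn_ord j1) (ltn_ord j2) hn hx; clear; lia.
    by move=> h; apply: ord_inj; move: h; clear; lia.
  have -> : [set y | pi3 y == x] = f @: [set: 'I_k.+1].
    apply/setP => y; rewrite inE; apply/idP/imsetP.
      rewrite -val_eqE /= => /eqP hy.
      have hyk : y %/ 3 < k.+1 by move: (ltn_ord y) hn; clear; lia.
      exists (inord (y %/ 3)); first by rewrite inE.
      apply: ord_inj; rewrite /f /= !inordK //.
        by move: hy; clear; lia.
      by move: (ltn_ord y) hn hx hy; clear; lia.
    move=> [j _ ->]; rewrite -val_eqE /= /f inordK.
      by apply/eqP; move: hx; clear; lia.
    by move: (ltn_ord j) hn hx; clear; lia.
  by rewrite card_imset // cardsT card_ord.
Qed.


Lemma cyc_gamma n : gamma_c (cyc n) = n.+1.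
Proof.
apply/eqP; rewrite eqn_leq cyc_upper /=.
apply: gamma_ge; first by rewrite card_ord; lia.
exact: cyc_lower.
Qed.

Theorem theorem2p15 :
  (forall (k : nat) (TF TG : finType) (eF : rel TF) (eG : rel TG),
      simple_graph eF -> simple_graph eG ->
      connected_graph eF -> connected_graph eG ->
      k_fold_cover k eG eF ->
      (gamma_c eG <= k * (gamma_c eF + 2) - 2)%N)
  /\
  (forall k : nat, (0 < k)%N ->
      exists (TF TG : finType) (eF : rel TF) (eG : rel TG),
        simple_graph eF /\ simple_graph eG /\
        connected_graph eF /\ connected_graph eG /\
        k_fold_cover k eG eF /\
        gamma_c eG = (k * (gamma_c eF + 2) - 2)%N).
Proof.
split.
  by move=> k TF TG eF eG sF sG cF cG hcov; exact: part1.
case=> // k _.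
exists ('I_3 : finType), ('I_(3 * k).+3 : finType), K3, (cyc (3 * k)).
split; first exact: K3_simple.
split; first exact: cyc_simple.
split; first exact: K3_connected.
split; first exact: cyc_connected.
split; first by exists (@pi3 (3 * k)); exact: cyc_cover.
rewrite K3_gamma cyc_gamma; lia.
Qed.
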